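(* Let $n \geq 2$ and let $X_1, \dots, X_n$ be mutually independent nonnegative random variables with survival functions $\overline{F}_i(x) = \mathbb{P}(X_i > x)$, $i = 1, \dots, n$. Let $\boldsymbol{\theta} = (\theta_1, \dots, \theta_n) \in (0,1)^n$ with $\sum_{i=1}^n \theta_i = 1$, and let $\mathbf{I} = (I_1, \dots, I_n) \sim \mathrm{Categorical}(\boldsymbol{\theta})$ be independent of $X_1, \dots, X_n$. Suppose that for each $i \in \{1,\dots,n\}$ and every subset $\mu$ with $\{i\} \subseteq \mu \subsetneq \{1, \dots, n\}$, the condition $$\theta_{\mu} \, \overline{F}_i(x) \leq \overline{F}_i(x/\theta_{\mu}) \quad \text{for all } x \geq 0$$ is satisfied, where $\theta_\mu = \sum_{j \in \mu} \theta_j$. Then $$I_1 X_1 + \dots + I_n X_n \leq_{\mathrm{st}} \theta_1 X_1 + \dots + \theta_n X_n.$$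
   Context: $\mathbf{I} \sim \mathrm{Categorical}(\boldsymbol{\theta})$ means that almost surely exactly one component of $\mathbf{I}$ equals $1$ and all others equal $0$, with $\mathbb{P}(I_i = 1) = \theta_i$. For random variables $X, Y$, $X \leq_{\mathrm{st}} Y$ (first-order stochastic dominance) means $\mathbb{P}(X > x) \leq \mathbb{P}(Y > x)$ for all $x \in \mathbb{R}$. For a nonempty $\mu \subseteq \{1,\dots,n\}$, $\theta_\mu := \sum_{j\in\mu}\theta_j$. *)

(* Defs.v *)
From HB Require Import structures.
From mathcomp Require Import all_boot all_order all_algebra.
From mathcomp Require Import all_classical all_reals all_analysis.
Set Implicit Arguments. Unset Strict Implicit. Unset Printing Implicit Defensive.
Import Order.TTheory GRing.Theory Num.Theory.
Local Open Scope classical_set_scope.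
Local Open Scope ring_scope.

(* Mutual independence of a finite family of real random variables:
   the product rule P(X_0 \in B_0, ..., X_{n-1} \in B_{n-1}) = prod_i P(X_i \in B_i)
   for all Borel sets B_i (subfamilies are obtained by taking B_i = setT). *)
Definition mutually_independent {d} {T : measurableType d} {R : realType}
  (P : probability T R) (n : nat) (X : 'I_n -> T -> R) : Prop :=
  forall B : 'I_n -> set R, (forall i, measurable (B i)) ->
  P (\bigcap_(i in [set: 'I_n]) (X i @^-1` B i)) =
  (\prod_(i < n) P (X i @^-1` B i))%E.

Definition independent_vectors {d} {T : measurableType d} {R : realType}
  (P : probability T R) (m n : nat) (Y : 'I_m -> T -> R) (X : 'I_n -> T -> R) : Prop :=
  forall (C : 'I_m -> set R) (B : 'I_n -> set R),
  (forall j, measurable (C j)) -> (forall i, measurable (B i)) ->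
  P ((\bigcap_(j in [set: 'I_m]) (Y j @^-1` C j)) `&`
     (\bigcap_(i in [set: 'I_n]) (X i @^-1` B i))) =
  (P (\bigcap_(j in [set: 'I_m]) (Y j @^-1` C j)) *
   P (\bigcap_(i in [set: 'I_n]) (X i @^-1` B i)))%E.

Definition categorical {d} {T : measurableType d} {R : realType}
  (P : probability T R) (n : nat) (I : 'I_n -> T -> R) (theta : 'I_n -> R) : Prop :=
  [/\ (forall i, measurable_fun setT (I i)),
      {ae P, forall t, exists i, I i t = 1 /\ forall j, j != i -> I j t = 0}
    & forall i, P (I i @^-1` [set 1]) = (theta i)%:E].

Definition survival {d} {T : measurableType d} {R : realType}
  (P : probability T R) (X : T -> R) (x : R) : \bar R :=
  P [set t | x < X t].

Definition st_le {d} {T : measurableType d} {R : realType}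
  (P : probability T R) (X Y : T -> R) : Prop :=
  forall x : R, (P [set t | (x < X t)%R] <= P [set t | (x < Y t)%R])%E.

Definition theta_sum {R : realType} (n : nat) (theta : 'I_n -> R) (mu : {set 'I_n}) : R :=
  \sum_(j in mu) theta j.

(* Main.v *)
Require Import Defs.
From HB Require Import structures.
From mathcomp Require Import all_boot all_order all_algebra.
From mathcomp Require Import all_classical all_reals all_analysis.
From mathcomp Require Import ring lra zify.
Import Order.TTheory GRing.Theory Num.Theory.
Local Open Scope classical_set_scope.
Local Open Scope ring_scope.


Section Alg.
Variable R : realType.

Lemma alg_split (I : finType) (c f g h : I -> R) (D : {set I}) (l : I) :
  l \in D -> f l = g l + h l -> (forall j, j != l -> f j = g j) ->
  (forall j, j != l -> h j = g j) ->
  \sum_(j in D) c j * \prod_(k | k != j) f k =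
  \sum_(j in D) c j * \prod_(k | k != j) g k +
  \sum_(j in D :\ l) c j * \prod_(k | k != j) h k.
Proof.
move=> lD fl fg hg.
have Pf : forall j, j != l -> \prod_(k | k != j) f k =
    f l * \prod_(k | (k != j) && (k != l)) g k.
  move=> j jl; rewrite (bigD1 l) 1?eq_sym //=; congr (_ * _).
  by apply: eq_bigr => k /andP[_ kl]; exact: fg.
have Pg : forall j, j != l -> \prod_(k | k != j) g k =
    g l * \prod_(k | (k != j) && (k != l)) g k.
  by move=> j jl; rewrite (bigD1 l) 1?eq_sym //=.
have Ph : forall j, j != l -> \prod_(k | k != j) h k =
    h l * \prod_(k | (k != j) && (k != l)) g k.
  move=> j jl; rewrite (bigD1 l) 1?eq_sym //=; congr (_ * _).
  by apply: eq_bigr => k /andP[_ kl]; exact: hg.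
rewrite [LHS](bigD1 l lD) /= [X in _ = X + _](bigD1 l lD) /=.
have -> : \prod_(k | k != l) f k = \prod_(k | k != l) g k.
  by apply: eq_bigr => k; exact: fg.
have -> : \sum_(j in D :\ l) c j * \prod_(k | k != j) h k =
    \sum_(j in D | j != l) c j * \prod_(k | k != j) h k.
  by apply: eq_bigl => j; rewrite in_setD1 andbC.
rewrite -addrA; congr (_ + _); rewrite -big_split /=.
apply: eq_bigr => j /andP[_ jl].
rewrite Pf // Pg // Ph // fl; ring.
Qed.

Lemma alg_base (I : finType) (c f th : I -> R) (A : {set I}) (s : R) :
  0 < s -> s = \sum_(j in A) th j -> (forall j, 0 <= th j) ->
  (forall k, 0 <= f k) ->
  (forall j, j \in A -> s * c j <= f j) ->
  \sum_(j in A) th j * c j * \prod_(k | k != j) f k <= \prod_k f k.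
Proof.
move=> s0 sE th0 f0 hc.
apply: (@le_trans _ _ (\sum_(j in A) th j / s * \prod_k f k)).
  apply: ler_sum => j jA; rewrite [X in _ <= _ * X](bigD1 j) //= mulrA.
  have Q0 : 0 <= \prod_(k | k != j) f k by apply: prodr_ge0.
  apply: ler_wpM2r => //.
  have cj : c j <= f j / s by rewrite ler_pdivlMr // mulrC; exact: hc.
  rewrite -mulrA (mulrC s^-1) ; exact: ler_wpM2l.
rewrite -mulr_suml -mulr_suml -sE divff ?mul1r //.
by rewrite gt_eqF.
Qed.

End Alg.

Section Core.
Variables (R : realType) (d : measure_display) (T : measurableType d)
  (P : probability T R).

Definition pr (A : set T) : R := fine (P A).

Lemma prE A : measurable A -> P A = (pr A)%:E.
Proof. by move=> mA; rewrite /pr fineK // fin_num_measure. Qed.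

Lemma pr_ge0 A : 0 <= pr A.
Proof. by rewrite /pr fine_ge0 // measure_ge0. Qed.

Lemma pr_le A B : measurable A -> measurable B -> A `<=` B -> pr A <= pr B.
Proof.
move=> mA mB AB; rewrite -lee_fin -!prE //.
by apply: le_measure; rewrite ?inE.
Qed.

Lemma prDI A B : measurable A -> measurable B -> pr A = pr (A `\` B) + pr (A `&` B).
Proof.
move=> mA mB; apply/EFin_inj; rewrite EFinD -prE // -prE; last exact: measurableD.
rewrite -prE; last exact: measurableI.
exact: measureDI.
Qed.


Lemma pr_setT : pr setT = 1.
Proof. by rewrite /pr probability_setT. Qed.

Variables (n : nat) (X : 'I_n -> T -> R) (theta : 'I_n -> R) (x : R).
Hypothesis mX : forall i, measurable_fun setT (X i).
Hypothesis indep : mutually_independent P X.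
Hypothesis thpos : forall i, 0 < theta i.
Hypothesis x0 : 0 <= x.

Local Notation fset0 := (@finset.set0 _).
Definition thr (mu : {set 'I_n}) : R := x / theta_sum theta mu.
Definition pX j := pr (X j @^-1` `]x, +oo[%classic).
Hypothesis hyp : forall j (mu : {set 'I_n}), j \in mu ->
  theta_sum theta mu * pX j <= pr (X j @^-1` `]thr mu, +oo[%classic).

Definition Rect (Y : 'I_n -> set R) : set T :=
  \bigcap_(i in [set: 'I_n]) (X i @^-1` Y i).

Lemma mpre i Y : measurable Y -> measurable (X i @^-1` Y).
Proof. by move=> mY; have := mX i measurableT Y mY; rewrite setTI. Qed.

Lemma mRect Y : (forall i, measurable (Y i)) -> measurable (Rect Y).
Proof.
move=> mY; apply: fin_bigcap_measurable; first exact: finite_finset.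
by move=> i _; exact: mpre.
Qed.

Lemma prRect Y : (forall i, measurable (Y i)) ->
  pr (Rect Y) = \prod_(i < n) pr (X i @^-1` Y i).
Proof.
move=> mY; apply/EFin_inj; rewrite -prE; last exact: mRect.
rewrite /Rect indep // -prodEFin; apply: eq_bigr => i _.
by rewrite prE //; exact: mpre.
Qed.

Lemma tsum_ge0 mu : 0 <= theta_sum theta mu.
Proof. by apply: sumr_ge0 => i _; exact: ltW. Qed.

Lemma tsum_gt0 mu : mu != fset0 -> 0 < theta_sum theta mu.
Proof.
case/set0Pn => j jm; rewrite /theta_sum (bigD1 j) //=.
have := thpos j; have : 0 <= \sum_(i in mu | i != j) theta i.
  by apply: sumr_ge0 => i _; exact: ltW.
lra.
Qed.

Lemma tsum_le (mu A : {set 'I_n}) : mu \subset A -> theta_sum theta mu <= theta_sum theta A.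
Proof.
move=> sub; rewrite /theta_sum [X in _ <= X](bigID (fun j => j \in mu)) /=.
have -> : \sum_(i in A | i \in mu) theta i = \sum_(i in mu) theta i.
  apply: eq_bigl => i; case im: (i \in mu); rewrite ?andbT ?andbF //.
  exact: (fintype.subsetP sub).
rewrite lerDl; apply: sumr_ge0 => i _; exact: ltW.
Qed.

Lemma thr_le (mu A : {set 'I_n}) : mu != fset0 -> mu \subset A -> thr A <= thr mu.
Proof.
move=> mu0 sub; rewrite /thr; apply: ler_wpM2l => //.
have h1 := tsum_gt0 _ mu0.
have h2 : mu \subset A := sub.
have A0 : A != fset0.
  case/set0Pn: mu0 => j jm; apply/set0Pn; exists j; exact: (fintype.subsetP sub).
have h3 := tsum_gt0 _ A0.
by rewrite lef_pV2 ?posrE // tsum_le.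
Qed.

Definition Ymu (mu : {set 'I_n}) (j : 'I_n) : set R :=
  if j \in mu then `]thr mu, +oo[%classic else setT.

Definition EA (A : {set 'I_n}) : set T :=
  \bigcup_(mu in [set mu : {set 'I_n} | (mu \subset A) && (mu != fset0)])
     Rect (Ymu mu).

Lemma mYmu mu j : measurable (Ymu mu j).
Proof. by rewrite /Ymu; case: ifP => _ //; exact: measurable_itv. Qed.

Lemma mEA A : measurable (EA A).
Proof.
apply: fin_bigcup_measurable; first exact: finite_finset.
move=> mu _; apply: mRect => j; exact: mYmu.
Qed.

Lemma EA_mono (B A : {set 'I_n}) : B \subset A -> EA B `<=` EA A.
Proof.
move=> BA t [mu /= /andP[muB mu0] h]; exists mu => //=.
by rewrite mu0 andbT (fintype.subset_trans muB BA).
Qed.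


Definition bound (D : {set 'I_n}) (Y : 'I_n -> set R) : R :=
  \sum_(j in D) theta j * pX j * \prod_(l | l != j) pr (X l @^-1` Y l).

Definition MCprop (A : {set 'I_n}) := forall Y : 'I_n -> set R,
  (forall l, measurable (Y l)) ->
  (forall l, l \in A -> `]thr A, +oo[%classic `<=` Y l) ->
  bound A Y <= pr (EA A `&` Rect Y).

Lemma aux (A : {set 'I_n}) : (forall B : {set 'I_n}, B \proper A -> MCprop B) ->
  forall k (D U : {set 'I_n}) (Y : 'I_n -> set R),
  U \subset D -> D \subset A -> #|U| = k ->
  (forall l, measurable (Y l)) ->
  (forall l, l \in U -> `]thr A, +oo[%classic `<=` Y l) ->
  (forall l, l \in D -> l \notin U -> Y l = `]thr A, +oo[%classic) ->
  bound D Y <= pr (EA A `&` Rect Y).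
Proof.
move=> IHB; elim=> [|k IH] D U Y UD DA cU mY hU hD.
- have U0 : U = fset0 by apply/eqP; rewrite -cards_eq0 cU.
  have hD' : forall l, l \in D -> Y l = `]thr A, +oo[%classic.
    by move=> l lD; apply: hD => //; rewrite U0 inE.
  have [->|D0] := eqVneq D fset0.
    by rewrite /bound big_set0; exact: pr_ge0.
  have [DAe|DnA] := eqVneq D A.
    subst D.
    have sub : Rect Y `<=` EA A.
      move=> t Rt; exists A; first by rewrite /= subxx D0.
      move=> j _; rewrite /Ymu; case: ifP => jA //.
      by rewrite -(hD' j jA); exact: Rt.
    have -> : EA A `&` Rect Y = Rect Y by apply/setIidr.
    rewrite prRect //; apply: (@alg_base R _ _ _ theta A (theta_sum theta A)).
    - exact: tsum_gt0.
    - by [].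
    - by move=> j; exact: ltW.
    - by move=> k; exact: pr_ge0.
    - by move=> j jA; rewrite hD' //; exact: hyp.
  have DpA : D \proper A by rewrite finset.properEneq DnA DA.
  apply: le_trans (IHB D DpA Y mY _) _.
    move=> l lD; rewrite hD' // => y /=; rewrite !in_itv /= !andbT => h.
    exact: le_lt_trans (thr_le _ _ D0 DA) h.
  apply: pr_le.
  + apply: measurableI; [exact: mEA | exact: mRect].
  + apply: measurableI; [exact: mEA | exact: mRect].
  + by apply: setSI; exact: EA_mono.
- have : U != fset0 by rewrite -cards_eq0 cU.
  case/set0Pn => l lU.
  have lD : l \in D := fintype.subsetP UD l lU.
  have cU' : #|U :\ l| = k.
    by have := cardsD1 l U; rewrite lU cU add1n => -[].
  set b := thr A.
  pose Yin := fun l' => if l' == l then `]b, +oo[%classic else Y l'.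
  pose Yout := fun l' => if l' == l then Y l `\` `]b, +oo[%classic else Y l'.
  have mYin : forall l', measurable (Yin l').
    by move=> l'; rewrite /Yin; case: ifP => _ //; exact: measurable_itv.
  have mYout : forall l', measurable (Yout l').
    move=> l'; rewrite /Yout; case: ifP => _ //.
    apply: measurableD => //; exact: measurable_itv.
  have sUD' : U :\ l \subset D.
    by apply: fintype.subset_trans UD; exact: subsetDl.
  have H1 : bound D Yin <= pr (EA A `&` Rect Yin).
    apply: (IH D (U :\ l)) => //.
    - move=> l'; rewrite in_setD1 => /andP[l'l l'U].
      by rewrite /Yin (negbTE l'l); exact: hU.
    - move=> l' l'D; rewrite /Yin in_setD1 negb_and negbK.
      case: eqP => //= _ l'U; exact: hD.
  have H2 : bound (D :\ l) Yout <= pr (EA A `&` Rect Yout).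
    apply: (IH (D :\ l) (U :\ l)) => //.
    - by apply: finset.setSD.
    - by apply: fintype.subset_trans DA; exact: subsetDl.
    - move=> l'; rewrite in_setD1 => /andP[l'l l'U].
      by rewrite /Yout (negbTE l'l); exact: hU.
    - move=> l'; rewrite !in_setD1 => /andP[l'l l'D].
      rewrite (negbTE l'l) /= /Yout (negbTE l'l); exact: hD.
  have Ib : `]b, +oo[%classic `<=` Y l := hU l lU.
  have EIin : EA A `&` Rect Yin = (EA A `&` Rect Y) `&` X l @^-1` `]b, +oo[%classic.
    rewrite -setIA; congr (_ `&` _); apply/seteqP; split => t /=.
    + move=> h; split; last by have := h l I; rewrite /Yin eqxx.
      move=> j _; have := h j I; rewrite /Yin; case: eqP => [->|//]; exact: Ib.
    + move=> [h hl] j _; rewrite /Yin; case: eqP => [->|_] //; exact: h.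
  have EIout : EA A `&` Rect Yout = (EA A `&` Rect Y) `\` X l @^-1` `]b, +oo[%classic.
    apply/seteqP; split => t /=.
    + move=> [eA h]; split; last by have := h l I; rewrite /Yout eqxx => -[].
      split => // j _; have := h j I; rewrite /Yout; case: eqP => [->|//]; by case.
    + move=> [[eA h] hl]; split => // j _; rewrite /Yout; case: eqP => [->|_] //; last exact: h.
      by split => //; exact: h.
  rewrite (@prDI (EA A `&` Rect Y) (X l @^-1` `]b, +oo[%classic)); first last.
  + exact: mpre (measurable_itv _).
  + apply: measurableI; [exact: mEA | exact: mRect].
  rewrite -EIin -EIout addrC.
  rewrite /bound (@alg_split R _ (fun j => theta j * pX j) _
     (fun k => pr (X k @^-1` Yin k)) (fun k => pr (X k @^-1` Yout k)) D l) //.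
  + exact: lerD.
  + rewrite /Yin /Yout !eqxx addrC.
    rewrite (@prDI (X l @^-1` Y l) (X l @^-1` `]b, +oo[%classic)).
    * congr (_ + _); congr pr; apply/seteqP; split => t /=; try tauto.
      by move=> h; split => //; exact: Ib.
    * exact: mpre.
    * exact: mpre (measurable_itv _).
  + by move=> j /negbTE jl; rewrite /Yin jl.
  + by move=> j /negbTE jl; rewrite /Yin /Yout jl.
Qed.

Lemma MC : forall k (A : {set 'I_n}), (#|A| <= k)%N -> MCprop A.
Proof.
elim=> [|k IH] A cA.
  move: cA; rewrite leqn0 cards_eq0 => /eqP -> Y _ _.
  by rewrite /bound big_set0; exact: pr_ge0.
move=> Y mY hY.
apply: (@aux A _ #|A| A A Y) => //.
- move=> B BA; apply: IH; have := proper_card BA; move: cA; clear; lia.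
- by move=> l lA; rewrite lA.
Qed.

End Core.

Lemma measurable_sum_fun (R : realType) (d : measure_display) (T : measurableType d)
  (I : Type) (s : seq I) (F : I -> T -> R) :
  (forall i, measurable_fun setT (F i)) ->
  measurable_fun setT (fun t => \sum_(i <- s) F i t).
Proof.
move=> mF; elim: s => [|a s IH].
  rewrite (_ : (fun t => \sum_(i <- [::]) F i t) = (fun _ => 0)).
    exact: measurable_cst.
  by apply/funext => t; rewrite big_nil.
rewrite (_ : (fun t => \sum_(i <- a :: s) F i t) =
   (fun t => F a t + \sum_(i <- s) F i t)).
  exact: (measurable_realfun.measurable_funD (mF a) IH).
by apply/funext => t; rewrite big_cons.
Qed.

Lemma le_ae (R : realType) (d : measure_display) (T : measurableType d)
  (P : probability T R) (N E F : set T) :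
  measurable N -> P N = 0%E -> measurable E -> measurable F ->
  (forall t, ~ N t -> E t -> F t) -> (P E <= P F)%E.
Proof.
move=> mN PN mE mF h.
rewrite (measureDI P mE mN).
have h2 : (P (E `&` N) <= 0)%E.
  rewrite -PN.
  by apply: le_measure; rewrite ?inE //; exact: measurableI.
have h1 : (P (E `\` N) <= P F)%E.
  apply: le_measure; rewrite ?inE //; first exact: measurableD.
  by move=> t [Et Nt]; exact: h.
rewrite -[X in (_ <= X)%E]adde0; exact: leeD h1 h2.
Qed.

Lemma sub_fin (R : realType) (d : measure_display) (T : measurableType d)
  (P : probability T R) (n : nat) (A : set T) (G : 'I_n -> set T) :
  measurable A -> (forall i, measurable (G i)) ->
  A `<=` \bigcup_(i in [set: 'I_n]) G i -> (P A <= \sum_(i < n) P (G i))%E.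
Proof.
move=> mA mG sub.
pose F k := \bigcup_(i in [set i : 'I_n | val i = k]) G i.
have FE : forall i : 'I_n, F i = G i.
  move=> i; apply/seteqP; split => t.
    by move=> [j /= /val_inj ->].
  by move=> Gt; exists i.
have -> : \sum_(i < n) P (G i) = \sum_(i < n) P (F i).
  by apply: eq_bigr => i _; rewrite FE.
apply: (content_subadditive P) => //.
  move=> k _; apply: fin_bigcup_measurable; first exact: finite_finset.
  by move=> i _; exact: mG.
rewrite -bigcup_mkord => t /sub [i _ Git]; exists i => /=; first exact: ltn_ord.
by rewrite FE.
Qed.

Theorem theorem2 (R : realType) (d : measure_display) (T : measurableType d)
  (P : probability T R) (n : nat) (X : 'I_n -> T -> R) (I : 'I_n -> T -> R)
  (theta : 'I_n -> R) :
  (2 <= n)%N ->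
  (forall i, measurable_fun setT (X i)) ->
  (forall i, {ae P, forall t, 0 <= X i t}) ->
  mutually_independent P X ->
  (forall i, 0 < theta i < 1) ->
  \sum_(i < n) theta i = 1 ->
  categorical P I theta ->
  independent_vectors P I X ->
  (forall (i : 'I_n) (mu : {set 'I_n}), i \in mu -> (mu \proper [set: 'I_n])%SET ->
     forall x : R, 0 <= x ->
     ((theta_sum theta mu)%:E * survival P (X i) x
        <= survival P (X i) (x / theta_sum theta mu))%E) ->
  st_le P (fun t => \sum_(i < n) I i t * X i t) (fun t => \sum_(i < n) theta i * X i t).
Proof.
move=> n2 mX X0 indX thb thsum [mI aeI PI] indIX hyp0 y.
have thpos : forall i, 0 < theta i by move=> i; have /andP[] := thb i.
have aeX : {ae P, forall t, forall i, 0 <= X i t}.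
  by apply: filter_forall => i; exact: X0 i.
case: aeX => NX [mNX PNX subX].
case: aeI => NI [mNI PNI subI].
pose N := NX `|` NI.
have mN : measurable N by exact: measurableU.
have PN : P N = 0%E.
  apply/eqP; rewrite eq_le measure_ge0 andbT.
  have h1 : (P NX <= 0)%E by rewrite PNX.
  have h2 : (P NI <= 0)%E by rewrite PNI.
  apply: le_trans (measureU2 P mNX mNI) _.
  rewrite -[X in (_ <= X)%E](adde0 0); exact: leeD h1 h2.
have goodX : forall t, ~ N t -> forall i, 0 <= X i t.
  move=> t Nt; apply: contrapT => h; apply: Nt; left; exact: subX.
have goodI : forall t, ~ N t ->
    exists i, I i t = 1 /\ forall j, j != i -> I j t = 0.
  move=> t Nt; apply: contrapT => h; apply: Nt; right; exact: subI.
have setE : forall (f : T -> R) z, [set t | z < f t] = f @^-1` `]z, +oo[%classic.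
  by move=> f z; apply/seteqP; split => t /=; rewrite in_itv /= andbT.
have mset : forall (f : T -> R) z, measurable_fun setT f -> measurable [set t | z < f t].
  move=> f z mf; rewrite setE; have := mf measurableT _ (measurable_itv `]z, +oo[).
  by rewrite setTI.
have mSI : measurable_fun setT (fun t => \sum_(i < n) I i t * X i t).
  apply: measurable_sum_fun => i.
  exact: (measurable_realfun.measurable_funM (mI i) (mX i)).
have mSt : measurable_fun setT (fun t => \sum_(i < n) theta i * X i t).
  apply: measurable_sum_fun => i.
  exact: (measurable_realfun.measurable_funM (measurable_cst (theta i)) (mX i)).
pose G i := I i @^-1` [set 1] `&` [set t | y < X i t].
have mG : forall i, measurable (G i).
  move=> i; apply: measurableI; last exact: mset.
  by have := mI i measurableT _ (measurable_set1 1); rewrite setTI.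
have PG : forall i, P (G i) = ((theta i)%:E * P [set t | (y < X i t)%R])%E.
  move=> i.
  pose C j : set R := if j == i then [set 1] else setT.
  pose B j : set R := if j == i then `]y, +oo[%classic else setT.
  have mC : forall j, measurable (C j).
    by move=> j; rewrite /C; case: ifP => _ //; exact: measurable_set1.
  have mB : forall j, measurable (B j).
    by move=> j; rewrite /B; case: ifP => _ //; exact: measurable_itv.
  have e1 : \bigcap_(j in [set: 'I_n]) (I j @^-1` C j) = I i @^-1` [set 1].
    apply/seteqP; split => t /=.
      by move=> h; have := h i Logic.I; rewrite /C eqxx.
    by move=> h j _; rewrite /C; case: eqP => [->|].
  have e2 : \bigcap_(j in [set: 'I_n]) (X j @^-1` B j) = [set t | y < X i t].
    rewrite setE; apply/seteqP; split => t /=.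
      by move=> h; have := h i Logic.I; rewrite /B eqxx.
    by move=> h j _; rewrite /B; case: eqP => [->|].
  have := indIX C B mC mB; rewrite e1 e2 PI => <-.
  by [].
have step1 : (P [set t | (y < \sum_(i < n) I i t * X i t)%R] <=
    \sum_(i < n) ((theta i)%:E * P [set t | (y < X i t)%R]))%E.
  apply: (@le_trans _ _ (P (\bigcup_(i in [set: 'I_n]) G i))).
    apply: (@le_ae _ _ _ P N _ _ mN PN (mset _ _ mSI)).
      apply: fin_bigcup_measurable; first exact: finite_finset.
      by move=> i _; exact: mG.
    move=> t Nt /=; have [i [Ii1 Ij0]] := goodI t Nt.
    rewrite (bigD1 i) //= big1 ?addr0; last first.
      by move=> j ji; rewrite Ij0 // mul0r.
    by rewrite Ii1 mul1r => h; exists i.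
  apply: le_trans (@sub_fin _ _ _ P n _ G _ mG _) _ => //.
    apply: fin_bigcup_measurable; first exact: finite_finset.
    by move=> i _; exact: mG.
  by apply: lee_sum => i _; rewrite PG.
have [y0|y0] := leP 0 y; last first.
  apply: le_trans (probability_le1 P (mset _ _ mSI)) _.
  rewrite -(probability_setT P); apply: (@le_ae _ _ _ P N _ _ mN PN) => //; first exact: mset.
  move=> t Nt _ /=; apply: lt_le_trans y0 _.
  by apply: sumr_ge0 => i _; apply: mulr_ge0; [exact: ltW | exact: goodX].
apply: le_trans step1 _.
have hyp : forall j (mu : {set 'I_n}), j \in mu ->
    theta_sum theta mu * pX _ _ _ P n X y j <= pr _ _ _ P (X j @^-1` `]thr _ n theta y mu, +oo[%classic).
  move=> j mu jmu.
  have [muT|muT] := eqVneq mu [set: 'I_n]%SET.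
    have t1 : theta_sum theta mu = 1.
      by rewrite -thsum /theta_sum muT; apply: eq_bigl => k; rewrite inE.
    by rewrite /thr /pX t1 mul1r divr1.
  have := hyp0 j mu jmu _ y y0; rewrite properT muT => /(_ isT).
  rewrite /survival !setE !prE; first by rewrite lee_fin.
  + exact: mpre.
  + exact: mpre.
have cA : (#|[set: 'I_n]%SET| <= n)%N by rewrite cardsT card_ord.
have MCf := MC _ _ _ P n X theta y mX indX thpos y0 hyp _ _ cA (fun _ => setT) (fun _ => measurableT) (fun _ _ => @subsetT _ _).
rewrite (_ : (\sum_(i < n) ((theta i)%:E * P [set t | (y < X i t)%R]))%E =
   (bound _ _ _ P n X theta y [set: 'I_n]%SET (fun _ => setT))%:E); last first.
  rewrite /bound -sumEFin; apply: eq_big => [i|i _]; first by rewrite inE.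
  rewrite big1 ?mulr1; last by move=> l _; rewrite preimage_setT pr_setT.
  rewrite /pX setE prE ?EFinM //; exact: mpre.
move: MCf; rewrite -lee_fin => MCf; apply: le_trans MCf _.
rewrite -prE; last first.
  by apply: measurableI; [exact: mEA | apply: mRect].
apply: (@le_ae _ _ _ P N _ _ mN PN); first by apply: measurableI; [exact: mEA | apply: mRect].
  exact: mset.
move=> t Nt [[mu /= /andP[_ mu0] Emu] _].
rewrite (bigID (fun i => i \in mu)) /=.
have h2 : 0 <= \sum_(i < n | i \notin mu) theta i * X i t.
  by apply: sumr_ge0 => i _; apply: mulr_ge0; [exact: ltW | exact: goodX].
have h1 : y < \sum_(i < n | i \in mu) theta i * X i t.
  have tm := tsum_gt0 _ _ _ thpos _ mu0.
  have -> : y = \sum_(i < n | i \in mu) theta i * thr _ n theta y mu.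
    rewrite -mulr_suml /thr.
    rewrite (_ : \sum_(i < n | i \in mu) theta i = theta_sum theta mu) //.
    by rewrite mulrC divfK // gt_eqF.
  apply: ltr_sum.
    case/set0Pn: mu0 => j jm; apply/hasP; exists j => //; exact: mem_index_enum.
  move=> i im; rewrite ltr_pM2l //.
  by have := Emu i Logic.I; rewrite /Ymu im /= in_itv /= andbT.
lra.
Qed.
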